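(* For every $X\in\mathfrak g$, with $x^{(-1)}_N$ denoting the coefficient of $\lambda^{-1}E_{N,1}$ (i.e. of $\lambda^{-1}E_{N,N+1}$) in $X$, ${\rm A}_2(\mathcal FX)+{\rm S}^*(X\mathcal F)=\mathcal F\,{\rm R}(X)-2\alpha x_N^{(-1)}I$ and ${\rm A}_1(X\mathcal F)+{\rm S}(\mathcal FX)={\rm R}(X)\,\mathcal F-2\alpha x_N^{(-1)}I$.
   Context: Periodic lattice setting: $N\ge2$; $\mathfrak g=\{X(\lambda)\in gl(N)[\lambda,\lambda^{-1}]:\Omega X(\lambda)\Omega^{-1}=X(\omega\lambda)\}$, $\omega=e^{2\pi i/N}$, $\Omega=\mathrm{diag}(1,\omega,\dots,\omega^{N-1})$, matrix indices modulo $N$. $\mathfrak g_p$ = elements $\lambda^p\sum_{j-k\equiv p\,(\mathrm{mod}\,N)}x_{jk}E_{jk}$; $P_0,P_{>0},P_{\ge0},P_{<0}$ the projections onto $\mathfrak g_0$, $\oplus_{p>0}\mathfrak g_p$, $\oplus_{p\ge0}\mathfrak g_p$, $\oplus_{p<0}\mathfrak g_p$. ${\rm R}=P_{\ge0}-P_{<0}$, ${\rm R}_0=P_{>0}-P_{<0}$. $W$ is linear with $W=W\circ P_0$ and $W(E_{kk})=\sum_{j=1}^N\mathrm{sgn}(k-j)E_{jj}$. ${\rm A}_1={\rm R}_0+W$, ${\rm A}_2={\rm R}_0-W$, ${\rm S}=P_0-W$, ${\rm S}^*=P_0+W$. $\alpha$ real, $\mathcal F=I-\alpha\lambda\sum_{k=1}^NE_{k+1,k}$.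 *)

(* Defs.v *)
From HB Require Import structures.
From mathcomp Require Import all_boot all_order all_algebra all_field.
Set Implicit Arguments. Unset Strict Implicit. Unset Printing Implicit Defensive.
Import Order.TTheory GRing.Theory Num.Theory.
Local Open Scope ring_scope.

(* Matrix-valued Laurent polynomials in lambda: coefficient of lambda^p is
   lcoef p; finitely supported (support in [-lbound, lbound]).
   Matrix indices are 0-based: paper index k (1..N) is k-1 here. *)
Record loopM (N : nat) := Loop {
  lcoef :> int -> 'M[algC]_N;
  lbound : nat;
  lbounded : forall p : int, (lbound < `|p|)%N -> lcoef p = 0 }.

(* Laurent product X * Y (X : loop polynomial, Y arbitrary coefficient family):
   (X Y)_p = sum_q X_q Y_(p-q), the sum ranging over the support of X. *)
Definition lmulL N (X : loopM N) (Y : int -> 'M[algC]_N) : int -> 'M[algC]_N :=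
  fun p => \sum_(i < (2 * lbound X).+1)
             X (i%:Z - (lbound X)%:Z) *m Y (p - (i%:Z - (lbound X)%:Z)).
Definition lmulR N (Y : int -> 'M[algC]_N) (X : loopM N) : int -> 'M[algC]_N :=
  fun p => \sum_(i < (2 * lbound X).+1)
             Y (p - (i%:Z - (lbound X)%:Z)) *m X (i%:Z - (lbound X)%:Z).

Definition ladd N (f g : int -> 'M[algC]_N) : int -> 'M[algC]_N := fun p => f p + g p.
Definition lsub N (f g : int -> 'M[algC]_N) : int -> 'M[algC]_N := fun p => f p - g p.
Definition lscale N (a : algC) (f : int -> 'M[algC]_N) : int -> 'M[algC]_N :=
  fun p => a *: f p.

(* This is the graded description of Omega X(l) Omega^-1 = X(w l). *)
Definition in_g N (X : loopM N) : Prop :=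
  forall (p : int) (j k : 'I_N),
    ~~ (N%:Z %| (j%:Z - k%:Z - p))%Z -> X p j k = 0.

Definition P0 N (X : int -> 'M[algC]_N) : int -> 'M[algC]_N :=
  fun p => if p == 0 then X p else 0.
Definition Ppos N (X : int -> 'M[algC]_N) : int -> 'M[algC]_N :=
  fun p => if 0 < p then X p else 0.
Definition Pnneg N (X : int -> 'M[algC]_N) : int -> 'M[algC]_N :=
  fun p => if 0 <= p then X p else 0.
Definition Pneg N (X : int -> 'M[algC]_N) : int -> 'M[algC]_N :=
  fun p => if p < 0 then X p else 0.

(* W = W o P0, W(E_kk) = sum_j sgn(k-j) E_jj (extended linearly; elements of
   g_0 are diagonal constant matrices). *)
Definition Wop N (X : int -> 'M[algC]_N) : int -> 'M[algC]_N :=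
  fun p => if p == 0 then
     \matrix_(i, j) ((i == j)%:R *
        \sum_(k < N) (sgz (k%:Z - j%:Z))%:~R * X 0 k k)
   else 0.

Definition Rop N X := lsub (@Pnneg N X) (Pneg X).
Definition R0op N X := lsub (@Ppos N X) (Pneg X).
Definition A1op N X := ladd (@R0op N X) (Wop X).
Definition A2op N X := lsub (@R0op N X) (Wop X).
Definition Sop N X := lsub (@P0 N X) (Wop X).
Definition Sstarop N X := ladd (@P0 N X) (Wop X).

Definition lid N : int -> 'M[algC]_N := fun p => if p == 0 then 1%:M else 0.

(* Cyclic shift sum_{k=1}^N E_{k+1,k}, indices mod N (0-based: (k+1 mod N, k)). *)
Definition shiftL N : 'M[algC]_N :=
  \matrix_(i, j) ((i : nat) == (j.+1 %% N)%N)%:R.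

Definition Fcoef N (alpha : algC) : int -> 'M[algC]_N :=
  fun p => if p == 0 then 1%:M else if p == 1 then - alpha *: shiftL N else 0.

Lemma Fcoef_bounded N alpha :
  forall p : int, (1 < `|p|)%N -> @Fcoef N alpha p = 0.
Proof.
move=> p hp; rewrite /Fcoef.
have -> : (p == 0) = false by apply/negbTE; apply: contraTneq hp => ->.
have -> : (p == 1) = false by apply/negbTE; apply: contraTneq hp => ->.
by [].
Qed.

Definition Floop N (alpha : algC) : loopM N := Loop (@Fcoef_bounded N alpha).

(* Main.v *)
Require Import Defs.
From HB Require Import structures.
From mathcomp Require Import all_boot all_order all_algebra all_field.
From mathcomp Require Import zify ring.
From Stdlib Require Import FunctionalExtensionality.
Import Order.TTheory GRing.Theory Num.Theory.
Local Open Scope ring_scope.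

Lemma lmulL_F N a (Y : int -> 'M[algC]_N) p :
  lmulL (Floop N a) Y p = Y p - a *: (shiftL N *m Y (p - 1)).
Proof.
rewrite /lmulL /=. rewrite !big_ord_recr big_ord0 /= add0r /Fcoef /=.
rewrite !subr0 !mul1mx !mul0mx add0r -scaleNr -scalemxAl scaleNr.
by rewrite addrC.
Qed.

Lemma lmulR_F N a (Y : int -> 'M[algC]_N) p :
  lmulR Y (Floop N a) p = Y p - a *: (Y (p - 1) *m shiftL N).
Proof.
rewrite /lmulR /=. rewrite !big_ord_recr big_ord0 /= add0r /Fcoef /=.
rewrite !subr0 !mulmx1 !mulmx0 add0r -scaleNr -scalemxAr scaleNr.
by rewrite addrC.
Qed.


Section Sh.
Variables (N : nat) (N0 : (0 < N)%N).
Definition sucI (j : 'I_N) : 'I_N := Ordinal (ltn_pmod j.+1 N0).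
Definition preI (j : 'I_N) : 'I_N := Ordinal (ltn_pmod (j + N.-1) N0).

Lemma suc_pre (i : 'I_N) : sucI (preI i) = i.
Proof. apply: val_inj => /=. have := ltn_ord i. move: (val i) => a ha. 
rewrite -addn1 modnDml -addnA addn1 prednK // modnDr modn_small //. Qed.

Lemma sucE (i k : 'I_N) : ((i : nat) == (k.+1 %% N)%N) = (k == preI i).
Proof.
apply/eqP/eqP => [h|->]; last by rewrite -[X in _ = X]/(val (sucI (preI i))) suc_pre.
apply: val_inj => /=; rewrite h modnDml addSnnS prednK // modnDr modn_small //.
Qed.

Lemma mul_shift_r (M : 'M[algC]_N) i j : (M *m shiftL N) i j = M i (sucI j).
Proof.
rewrite mxE (bigD1 (sucI j)) //= big1 ?addr0 => [|k hk].
  by rewrite mxE eqxx mulr1.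
rewrite mxE; case: eqP => [h|]; last by rewrite mulr0.
by case/negP: hk; apply/eqP/val_inj.
Qed.

Lemma mul_shift_l (M : 'M[algC]_N) i j : (shiftL N *m M) i j = M (preI i) j.
Proof.
rewrite mxE (bigD1 (preI i)) //= big1 ?addr0 => [|k hk].
  by rewrite mxE sucE eqxx mul1r.
by rewrite mxE sucE (negbTE hk) mul0r.
Qed.
End Sh.


Lemma modN_eq (N a b : nat) (m : int) : (a < N)%N -> (b < N)%N ->
  a%:Z - b%:Z = m * N%:Z -> a = b.
Proof.
move=> ha hb hm.
have [hm0|[h1|h1]] : m = 0 \/ (1 <= m \/ m <= -1) by lia.
- rewrite hm0 in hm; lia.
- have : 1 * N%:Z <= m * N%:Z by apply: ler_wpM2r => //; lia. lia.
- have : m * N%:Z <= -1 * N%:Z by apply: ler_wpM2r => //; lia. lia.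
Qed.

Lemma Xm1_suc N (N0 : (0 < N)%N) (X : loopM N) (hX : in_g X) (i j : 'I_N) :
  i != j -> X (-1) i (sucI N N0 j) = 0.
Proof.
move=> hij; apply: hX; apply/negP => /dvdzP [m hm]; move: hm => /=.
have := ltn_ord i; have := ltn_ord j; move/eqP: hij => hij.
have hij' : (i : nat) <> j by move=> h; apply: hij; apply: val_inj.
move: (val i) (val j) hij' => a b hab ha hb.
have hmod : (b.+1 %% N = b.+1 \/ b.+1 = N)%N.
  case: (ltngtP b.+1 N) => h; [left; exact: modn_small|lia|by right].
case: hmod => [->|hlt].
  move=> hm; apply: hab; apply: (@modN_eq N _ _ (m)) => //; lia.
rewrite -hlt modnn => hm; apply: hab; apply: (@modN_eq N _ _ (m-1)) => //.
rewrite mulrBl; lia.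
Qed.

Lemma Xm1_pre N (N0 : (0 < N)%N) (X : loopM N) (hX : in_g X) (i j : 'I_N) :
  i != j -> X (-1) (preI N N0 i) j = 0.
Proof.
move=> hij; apply: hX; apply/negP => /dvdzP [m hm]; move: hm => /=.
have := ltn_ord i; have := ltn_ord j; move/eqP: hij => hij.
have hij' : (i : nat) <> j by move=> h; apply: hij; apply: val_inj.
move: (val i) (val j) hij' => a b hab ha hb.
move: hb; case: a hab => [|a] hab hb.
  rewrite add0n modn_small ?prednK; try lia.
  move=> hm; apply: hab; apply: (@modN_eq N _ _ (m-1)) => //.
  rewrite mulrBl; lia.
rewrite addSnnS prednK ?modnDr ?modn_small; try lia.
move=> hm; apply: hab; apply: (@modN_eq N _ _ (m)) => //; lia.
Qed.


Lemma tel_nat (c : nat -> algC) (n i : nat) : (i <= n)%N ->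
  \sum_(0 <= k < n.+1) (sgz (k%:Z - i%:Z))%:~R * (c (if k == 0%N then n else k.-1) - c k)
  = c i + c (if i == 0%N then n else i.-1) - 2 * c n.
Proof.
move=> hi.
rewrite (@big_cat_nat _ _ _ i) //=; last by lia.
rewrite (@big_ltn _ _ _ i) ?ltnS // subrr sgz0 mul0r add0r.
have hB : \sum_(i.+1 <= k < n.+1) (sgz (k%:Z - i%:Z))%:~R *
     (c (if k == 0%N then n else k.-1) - c k) = c i - c n.
  rewrite (@telescope_sumr_eq _ _ _ (fun k => - c k.-1)) //=; last first.
    move=> k /andP[h1 h2]; rewrite gtr0_sgz; last by lia.
    have -> : (k == 0%N) = false by lia.
    by rewrite mul1r; case: k h1 h2 => //= k _ _; rewrite opprK addrC.
  by rewrite opprK addrC.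
rewrite hB.
case: i hi hB => [|i] hi _.
  by rewrite big_geq //= add0r; ring.
rewrite big_ltn //= (@telescope_sumr_eq _ _ _ (fun k => c k.-1)) //=; last first.
  move=> k /andP[h1 h2]; rewrite ltr0_sgz; last by lia.
  have -> : (k == 0%N) = false by lia.
  by case: k h1 h2 => //= k _ _; rewrite mulN1r opprB.
rewrite ltr0_sgz; last by lia.
rewrite mulN1r; ring.
Qed.


Lemma tel_ord N (N0 : (0 < N)%N) (b : 'I_N -> algC) (i iN : 'I_N)
  (hiN : (iN : nat) = N.-1) :
  \sum_(k < N) (sgz (k%:Z - i%:Z))%:~R * (b (preI N N0 k) - b k)
  = b i + b (preI N N0 i) - 2 * b iN.
Proof.
case: N N0 b i iN hiN => [|n] N0 b i iN hiN; first by [].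
pose c m := b (inord m).
have hpre : forall k : 'I_n.+1, preI n.+1 N0 k = inord (if (k : nat) == 0%N then n else k.-1).
  move=> k; apply: val_inj => /=; have hk := ltn_ord k; move: (nat_of_ord k) hk => m hm.
  rewrite inordK; last by case: m hm => //= *; lia.
  case: m hm => [|m] hm /=; first by rewrite add0n modn_small.
  rewrite addSnnS modnDr modn_small //; lia.
have -> : iN = inord n by apply: val_inj; rewrite /= inordK.
pose F k := (sgz (k%:Z - i%:Z))%:~R * (c (if k == 0%N then n else k.-1) - c k).
rewrite (eq_bigr (fun k : 'I_n.+1 => F k)); last by move=> k _; rewrite /F hpre /c inord_val.
rewrite -(big_mkord xpredT F) // /F tel_nat; last by rewrite -ltnS. 
by rewrite hpre /c inord_val.
Qed.

Section Main.
Variables (N : nat) (N0 : (0 < N)%N) (X : loopM N) (iN : 'I_N) (hiN : (iN : nat) = N.-1).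

Lemma Wop0 (Y : int -> 'M[algC]_N) (i j : 'I_N) :
  Wop Y 0 i j = (i == j)%:R * \sum_(k < N) (sgz (k%:Z - j%:Z))%:~R * Y 0 k k.
Proof. by rewrite /Wop eqxx mxE. Qed.

Lemma Wdiff a (i : 'I_N) :
  \sum_(k < N) (sgz (k%:Z - i%:Z))%:~R * lmulR X (Floop N a) 0 k k =
  \sum_(k < N) (sgz (k%:Z - i%:Z))%:~R * lmulL (Floop N a) X 0 k k +
  a * (X (-1) i (sucI N N0 i) + X (-1) (preI N N0 i) i - 2 * X (-1) iN (sucI N N0 iN)).
Proof.
pose b (k : 'I_N) : algC := X (-1) k (sucI N N0 k).
have T := @tel_ord N N0 b i iN hiN.
have key : \sum_(k < N) (sgz (k%:Z - i%:Z))%:~R * lmulR X (Floop N a) 0 k k -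
  \sum_(k < N) (sgz (k%:Z - i%:Z))%:~R * lmulL (Floop N a) X 0 k k =
  a * \sum_(k < N) (sgz (k%:Z - i%:Z))%:~R * (b (preI N N0 k) - b k).
  rewrite -sumrB mulr_sumr; apply: eq_bigr => k _.
  rewrite lmulR_F lmulL_F !(mul_shift_l, mul_shift_r, mxE) /b suc_pre sub0r; ring.
apply/eqP; rewrite addrC -subr_eq; apply/eqP.
by rewrite key T /b suc_pre.
Qed.
End Main.

Theorem mainTheorem8 (N : nat) (hN : (2 <= N)%N) (alpha : algC)
  (halpha : alpha \is Num.real) (X : loopM N) (hX : in_g X)
  (iN i1 : 'I_N) (hiN : (iN : nat) = N.-1) (hi1 : (i1 : nat) = 0%N) :
  let F := Floop N alpha in
  let xN := X (-1) iN i1 in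
  ladd (A2op (lmulL F X)) (Sstarop (lmulR X F))
    = lsub (lmulL F (Rop X)) (lscale (2 * alpha * xN) (lid N))
  /\
  ladd (A1op (lmulR X F)) (Sop (lmulL F X))
    = lsub (lmulR (Rop X) F) (lscale (2 * alpha * xN) (lid N)).
Proof.
move=> F xN.
have N0 : (0 < N)%N by apply: leq_trans hN.
have hx : xN = X (-1) iN (sucI N N0 iN).
  rewrite /xN; congr (X _ _ _); apply: val_inj => /=.
  by rewrite hi1 hiN prednK // modnn.
split; apply: functional_extensionality => p;
  rewrite /A1op /A2op /Sop /Sstarop /R0op /Rop /ladd /lsub /lscale /P0 /Ppos /Pnneg /Pneg /lid /=;
  rewrite /F ?lmulL_F ?lmulR_F /=.
- case: (ltgtP p 0) => hp.
  + have h4 : (0 <= p - 1) = false by lia.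
    have h5 : (p - 1 < 0) = true by lia.
    have h6 : (p == 0) = false by lia.
    rewrite /Wop ?h4 ?h5 ?h6 ?hp.
    apply/matrixP => i j; rewrite !(mul_shift_l, mul_shift_r, mxE);ring.
  + have h4 : (0 <= p - 1) = true by lia.
    have h5 : (p - 1 < 0) = false by lia.
    have h6 : (p == 0) = false by lia.
    rewrite /Wop ?h4 ?h5 ?h6 ?hp.
    apply/matrixP => i j; rewrite !(mul_shift_l, mul_shift_r, mxE); ring.
  + subst p; rewrite ?eqxx ?ltxx ?lexx /=.
    have h4 : (0 <= (0:int) - 1) = false by [].
    have h5 : ((0:int) - 1 < 0) = true by [].
    rewrite ?h4 ?h5 ?sub0r.
    apply/matrixP => i j; rewrite !(Wop0, mul_shift_l, mul_shift_r, mxE).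
    case: (eqVneq i j) => [<-|hij].
      rewrite (@Wdiff _ N0 X _ hiN alpha i) hx ?eqxx; rewrite [true%:R]/=; ring.
    rewrite [false%:R]/= !mul0r (@Xm1_suc _ N0 X hX i j hij) (@Xm1_pre _ N0 X hX i j hij); ring.
- case: (ltgtP p 0) => hp.
  + have h4 : (0 <= p - 1) = false by lia.
    have h5 : (p - 1 < 0) = true by lia.
    have h6 : (p == 0) = false by lia.
    rewrite /Wop ?h4 ?h5 ?h6 ?hp.
    apply/matrixP => i j; rewrite !(mul_shift_l, mul_shift_r, mxE);ring.
  + have h4 : (0 <= p - 1) = true by lia.
    have h5 : (p - 1 < 0) = false by lia.
    have h6 : (p == 0) = false by lia.
    rewrite /Wop ?h4 ?h5 ?h6 ?hp.
    apply/matrixP => i j; rewrite !(mul_shift_l, mul_shift_r, mxE); ring.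
  + subst p; rewrite ?eqxx ?ltxx ?lexx /=.
    have h4 : (0 <= (0:int) - 1) = false by [].
    have h5 : ((0:int) - 1 < 0) = true by [].
    rewrite ?h4 ?h5 ?sub0r.
    apply/matrixP => i j; rewrite !(Wop0, mul_shift_l, mul_shift_r, mxE).
    case: (eqVneq i j) => [<-|hij].
      rewrite (@Wdiff _ N0 X _ hiN alpha i) hx ?eqxx; rewrite [true%:R]/=; ring.
    rewrite [false%:R]/= !mul0r (@Xm1_suc _ N0 X hX i j hij) (@Xm1_pre _ N0 X hX i j hij); ring.
Qed.
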